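(* Let $p\ge2$, $\mathcal K>0$ and $b(\xi)=\mathcal K|\xi|^{p-2}\xi$ on $\mathbb{R}^{Nn}$. Then for all $\xi,\xi_o,G\in\mathbb{R}^{Nn}$ and every invertible $\Psi\in\mathbb{R}^{n\times n}$, $$\big|b(\xi\Psi)-b(\xi_o\Psi)-\big[b((\xi+G)\Psi)-b((\xi_o+G)\Psi)\big]\big|\le c\,|G|\big(|\xi_o|^2+|\xi-\xi_o|^2+|G|^2\big)^{\frac{p-3}2}|\xi-\xi_o|$$ with a constant $c=c(p,\mathcal K,|\Psi|,|\Psi^{-1}|)$. *)

(* Defs.v *)
From HB Require Import structures.
From mathcomp Require Import all_boot all_order all_algebra.
From mathcomp Require Import reals exp.
Set Implicit Arguments. Unset Strict Implicit. Unset Printing Implicit Defensive.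
Import Order.TTheory GRing.Theory Num.Theory.
Local Open Scope ring_scope.

Definition frob (R : realType) (m n : nat) (A : 'M[R]_(m, n)) : R :=
  Num.sqrt (\sum_(i < m) \sum_(j < n) A i j ^+ 2).

Definition bfield (R : realType) (p K : R) (N n : nat) (xi : 'M[R]_(N, n))
  : 'M[R]_(N, n) := (K * powR (frob xi) (p - 2)) *: xi.

(* Main.v *)
Require Import Defs.
From HB Require Import structures.
From mathcomp Require Import all_boot all_order all_algebra.
From mathcomp Require Import boolp classical_sets reals topology normedtype derive exp.
From mathcomp Require Import ring lra.
Import Order.TTheory GRing.Theory Num.Theory.
Import numFieldNormedType.Exports.
Local Open Scope classical_set_scope.
Local Open Scope ring_scope.

Section S.
Variable R : realType.

Lemma is_derive_shift_comp (f : R -> R) (d u df : R) :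
  is_derive (u + d) 1 f df -> is_derive u 1 (fun v => f (v + d)) df.
Proof.
move=> H.
have hs : derivable (shift d : R -> R) u 1 by apply: ex_derive; exact: is_derive_shift.
have hf : derivable f ((shift d : R -> R) u) 1 by rewrite /shift /=; exact: ex_derive.
have -> : (fun v => f (v + d)) = f \o shift d by [].
split.
  apply/derivable1_diffP; apply: differentiable_comp; exact/derivable1_diffP.
rewrite -derive1E derive1_comp // !derive1E.
by rewrite derive_val (@derive_val _ _ _ _ _ _ _ (is_derive_shift _ _ _)) mulr1.
Qed.

Lemma mvt_lip (f df : R -> R) (lo hi Mb : R) :
  (forall u, lo <= u <= hi -> is_derive u 1 f (df u)) ->
  (forall u, lo <= u <= hi -> `|df u| <= Mb) ->
  forall s t, lo <= s <= hi -> lo <= t <= hi -> `|f s - f t| <= Mb * `|s - t|.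
Proof.
move=> Hd Hb.
suff H : forall s t, lo <= s <= hi -> lo <= t <= hi -> t <= s -> `|f s - f t| <= Mb * `|s - t|.
  move=> s t hs ht; case: (leP t s) => ts; first exact: H.
  by rewrite distrC [`|s - t|]distrC; apply: H => //; exact: ltW.
move=> s t /andP[ls hs] /andP[lt ht] ts.
have H1 : forall x, x \in `]t, s[%R -> is_derive x 1 f (df x).
  move=> x; rewrite in_itv /= => /andP[a b]; apply: Hd; apply/andP; split.
    exact: (le_trans lt (ltW a)).
  exact: (le_trans (ltW b) hs).
have H2 : {within `[t, s], continuous f}.
  apply: derivable_within_continuous => x; rewrite in_itv /= => /andP[a b].
  have : lo <= x <= hi by rewrite (le_trans lt a) (le_trans b hs).
  by move/Hd => /(@ex_derive _ _ _ _ _ _ _).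
have [c cts ->] := @MVT_segment R f df t s ts H1 H2.
rewrite normrM ler_wpM2r //.
apply: Hb; move: cts; rewrite in_itv /= => /andP[a b].
by rewrite (le_trans lt a) (le_trans b hs).
Qed.

End S.


Section S.
Variable R : realType.

Lemma pow_bound (e lo hi c : R) : 0 < lo -> lo <= c <= hi ->
  powR c e <= powR lo e + powR hi e.
Proof.
move=> lo0 /andP[lc ch].
have c0 : 0 < c by exact: lt_le_trans lc.
have [e0|e0] := leP 0 e.
  rewrite -[X in X <= _]add0r lerD ?powR_ge0 //.
  by apply: ge0_ler_powR => //; rewrite nnegrE ltW // (lt_le_trans c0 ch).
rewrite -[X in X <= _]addr0 lerD ?powR_ge0 //.
rewrite -[e]opprK !(powRN _ (- e)).
rewrite lef_pV2 ?posrE ?powR_gt0 //.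
apply: ge0_ler_powR => //; rewrite ?nnegrE ?oppr_ge0 ?(ltW e0) ?(ltW lo0) ?(ltW c0) //.
Qed.

Lemma is_derive_dpow (q u : R) : 0 < u ->
  is_derive u 1 (fun v => q * powR v (q - 1)) (q * ((q - 1) * powR u (q - 2))).
Proof.
move=> u0.
have H := is_derive1_powR (q - 1) u0.
have -> : q - 2 = q - 1 - 1 by ring.
have := @is_deriveZ R R R (fun v => powR v (q - 1)) q u 1 _ H.
done.
Qed.

Definition K1 (lo hi q : R) := `|q| * (powR lo (q - 1) + powR hi (q - 1)).
Definition K2 (lo hi q : R) := `|q * (q - 1)| * (powR lo (q - 2) + powR hi (q - 2)).

Lemma lip_pow {lo hi} q {s t : R} : 0 < lo -> lo <= s <= hi -> lo <= t <= hi ->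
  `|powR s q - powR t q| <= K1 lo hi q * `|s - t|.
Proof.
move=> lo0; apply: (@mvt_lip R (fun v => powR v q) (fun v => q * powR v (q - 1))).
  move=> u /andP[lu _]; apply: is_derive1_powR; exact: lt_le_trans lu.
move=> u hu; rewrite normrM /K1 ler_wpM2l // ger0_norm ?powR_ge0 //.
exact: pow_bound.
Qed.

Lemma lip_dpow {lo hi} q {s t : R} : 0 < lo -> lo <= s <= hi -> lo <= t <= hi ->
  `|q * powR s (q - 1) - q * powR t (q - 1)| <= K2 lo hi q * `|s - t|.
Proof.
move=> lo0; apply: (@mvt_lip R (fun v => q * powR v (q - 1)) (fun v => q * ((q - 1) * powR v (q - 2)))).
  move=> u /andP[lu _]; apply: is_derive_dpow; exact: lt_le_trans lu.
move=> u hu; rewrite mulrA normrM /K2 ler_wpM2l // ger0_norm ?powR_ge0 //.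
exact: pow_bound.
Qed.

Lemma sd_pow (lo hi q s t d : R) : 0 < lo -> lo <= s <= hi -> lo <= t <= hi ->
  lo <= s + d <= hi -> lo <= t + d <= hi ->
  `|powR (s + d) q - powR s q - (powR (t + d) q - powR t q)|
    <= K2 lo hi q * `|d| * `|s - t|.
Proof.
move=> lo0 hs ht hsd htd.
pose a := Num.min s t; pose b := Num.max s t.
have hab : forall u, a <= u <= b -> lo <= u <= hi /\ lo <= u + d <= hi.
{ move=> u /andP[au ub]; move: au ub; rewrite /a /b.
  move: hs ht hsd htd => /andP[? ?] /andP[? ?] /andP[? ?] /andP[? ?].
  rewrite ge_min le_max => ? ?.
  split; apply/andP; split.
  all: case: (leP s t) => st; move: st; rewrite ?minEle ?maxEle; try lra. }
have pos : forall u, lo <= u -> 0 < u by move=> u lu; exact: lt_le_trans lu.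
apply: (@mvt_lip R (fun v => powR (v + d) q - powR v q)
  (fun v => q * powR (v + d) (q - 1) - q * powR v (q - 1)) a b (K2 lo hi q * `|d|)).
- move=> u /hab [/andP[lu _] /andP[lud _]].
  have h1 := @is_derive_shift_comp R _ d u _ (is_derive1_powR q (pos _ lud)).
  have h2 := is_derive1_powR q (pos _ lu).
  exact: (@is_deriveB _ _ _ (fun v => powR (v + d) q) (fun v => powR v q) u 1 _ _ h1 h2).
- move=> u /hab [hu hud].
  have := lip_dpow q lo0 hud hu.
  have -> : u + d - u = d by ring.
  by [].
- by rewrite /a /b minEle maxEle; case: (leP s t) => st; apply/andP; split; lra.
- by rewrite /a /b minEle maxEle; case: (leP s t) => st; apply/andP; split; lra.
Qed.

End S.


Section CS.
Context {R : realType}.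

Lemma cs1 (T : finType) (a b : T -> R) :
  (\sum_k a k * b k) ^+ 2 <= (\sum_k a k ^+ 2) * (\sum_k b k ^+ 2).
Proof.
set S := \sum_k a k ^+ 2; set Tb := \sum_k b k ^+ 2; set P := \sum_k a k * b k.
have E0 : forall x y : R, \sum_k (x * a k - y * b k) ^+ 2
   = x ^+ 2 * S + (- (2 * x * y)) * P + y ^+ 2 * Tb.
  move=> x y; rewrite /S /P /Tb !mulr_sumr -!big_split /=.
  by apply: eq_bigr => k _; ring.
have E := E0 Tb P.
have H0 : 0 <= \sum_k (Tb * a k - P * b k) ^+ 2 by apply: sumr_ge0 => k _; exact: sqr_ge0.
rewrite E in H0.
have T0 : 0 <= Tb by apply: sumr_ge0 => k _; exact: sqr_ge0.
have S0 : 0 <= S by apply: sumr_ge0 => k _; exact: sqr_ge0.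
have [Tp|Tz] := ltP 0 Tb.
  have : 0 <= Tb * (Tb * S - P ^+ 2).
    have e : Tb * (Tb * S - P ^+ 2) = Tb ^+ 2 * S + - (2 * Tb * P) * P + P ^+ 2 * Tb by ring.
    by rewrite e.
  rewrite pmulr_rge0 // subr_ge0 => h; by rewrite mulrC.
have Tz' : Tb = 0 by apply/eqP; rewrite eq_le Tz T0.
have bz : forall k, b k = 0.
  move=> k; apply/eqP; rewrite -sqrf_eq0.
  have := Tz'; rewrite /Tb => /eqP; rewrite psumr_eq0; last by move=> i _; exact: sqr_ge0.
  by move/allP => /(_ k); rewrite mem_index_enum => /(_ isT) /implyP /(_ isT).
have -> : P = 0 by rewrite /P big1 // => k _; rewrite bz mulr0.
by rewrite Tz' expr0n /= mulr0.
Qed.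

Context {N n : nat}.
Implicit Types A B C : 'M[R]_(N, n).

Definition fs A := \sum_(i < N) \sum_(j < n) A i j ^+ 2.
Definition ip A B := \sum_(i < N) \sum_(j < n) A i j * B i j.

Lemma fs_ge0 A : 0 <= fs A.
Proof. by apply: sumr_ge0 => i _; apply: sumr_ge0 => j _; exact: sqr_ge0. Qed.

Lemma frobE A : frob A = Num.sqrt (fs A). Proof. by []. Qed.

Lemma frob_ge0 A : 0 <= frob A. Proof. exact: sqrtr_ge0. Qed.

Lemma frob2 A : frob A ^+ 2 = fs A.
Proof. by rewrite frobE sqr_sqrtr // fs_ge0. Qed.

Lemma pair_sum (F : 'I_N -> 'I_n -> R) :
  \sum_(i < N) \sum_(j < n) F i j = \sum_(x : 'I_N * 'I_n) F x.1 x.2.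
Proof. by rewrite pair_big. Qed.

Lemma ip_cs A B : `|ip A B| <= frob A * frob B.
Proof.
have h : ip A B ^+ 2 <= fs A * fs B.
  rewrite /ip /fs !pair_sum; exact (cs1 _ (fun x => A x.1 x.2) (fun x => B x.1 x.2)).
rewrite -sqrtr_sqr !frobE -sqrtrM ?fs_ge0 //.
by rewrite ler_sqrt // mulr_ge0 // fs_ge0.
Qed.

Lemma fsD A B : fs (A + B) = fs A + 2 * ip A B + fs B.
Proof.
rewrite /fs /ip mulr_sumr -!big_split /=; apply: eq_bigr => i _.
rewrite mulr_sumr -!big_split /=; apply: eq_bigr => j _.
by rewrite !mxE; ring.
Qed.

Lemma fsN A : fs (- A) = fs A.
Proof. by rewrite /fs; apply: eq_bigr => i _; apply: eq_bigr => j _; rewrite !mxE sqrrN. Qed.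

Lemma fsZ (t : R) A : fs (t *: A) = t ^+ 2 * fs A.
Proof.
rewrite /fs mulr_sumr; apply: eq_bigr => i _; rewrite mulr_sumr; apply: eq_bigr => j _.
by rewrite !mxE; ring.
Qed.

Lemma frobD A B : frob (A + B) <= frob A + frob B.
Proof.
rewrite frobE -(ger0_norm (addr_ge0 (frob_ge0 A) (frob_ge0 B))) -sqrtr_sqr ler_sqrt ?sqr_ge0 //.
rewrite fsD sqrrD !frob2; have h1 := ip_cs A B; have h2 := ler_norm (ip A B).
rewrite mulr2n; nra.
Qed.

Lemma frobN A : frob (- A) = frob A.
Proof. by rewrite !frobE fsN. Qed.

Lemma frobZ (t : R) A : frob (t *: A) = `|t| * frob A.
Proof. by rewrite !frobE fsZ sqrtrM ?sqr_ge0 // sqrtr_sqr. Qed.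

Lemma frobB A B : frob (A - B) <= frob A + frob B.
Proof. by rewrite -(frobN B) frobD. Qed.

Lemma frob_dist A B : `|frob A - frob B| <= frob (A - B).
Proof.
rewrite ler_norml; apply/andP; split.
  have := frobD (B - A) A; rewrite subrK -(frobN (B - A)) opprB; lra.
have := frobD (A - B) B; rewrite subrK; lra.
Qed.

Lemma frob_eq0 A : frob A = 0 -> A = 0.
Proof.
move=> h; have : fs A = 0 by rewrite -frob2 h expr0n.
rewrite /fs => /eqP; rewrite psumr_eq0; last by move=> i _; apply: sumr_ge0 => j _; exact: sqr_ge0.
move/allP => hi; apply/matrixP => i j; rewrite mxE.
have := hi i; rewrite mem_index_enum => /(_ isT) /implyP /(_ isT).
rewrite psumr_eq0; last by move=> k _; exact: sqr_ge0.
move/allP => /(_ j); rewrite mem_index_enum => /(_ isT) /implyP /(_ isT).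
by rewrite sqrf_eq0 => /eqP.
Qed.

Lemma frob0 : frob (0 : 'M[R]_(N, n)) = 0.
Proof. by rewrite frobE /fs big1 ?sqrtr0 // => i _; rewrite big1 // => j _; rewrite mxE expr0n. Qed.

Lemma sq_diff A B : `|frob A ^+ 2 - frob B ^+ 2| <= frob (A - B) * (frob A + frob B).
Proof.
rewrite subr_sqr normrM (ger0_norm (addr_ge0 (frob_ge0 _) (frob_ge0 _))).
by rewrite ler_wpM2r ?addr_ge0 ?frob_ge0 // frob_dist.
Qed.

Lemma quad_id B D H :
  frob (B + H) ^+ 2 - frob B ^+ 2 - (frob (B + D + H) ^+ 2 - frob (B + D) ^+ 2)
  = - 2 * ip D H.
Proof.
rewrite !frob2 /fs /ip mulr_sumr -!sumrB; apply: eq_bigr => i _.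
rewrite mulr_sumr -!sumrB; apply: eq_bigr => j _.
by rewrite !mxE; ring.
Qed.

End CS.

Lemma frob_mul (R : realType) (N n : nat) (A : 'M[R]_(N, n)) (P : 'M[R]_n) :
  frob (A *m P) <= frob A * frob P.
Proof.
rewrite !frobE -sqrtrM ?fs_ge0 // ler_sqrt; last by rewrite mulr_ge0 ?fs_ge0.
rewrite /fs mulr_suml; apply: ler_sum => i _.
rewrite exchange_big /= mulr_sumr; apply: ler_sum => j _.
rewrite mxE; exact (@cs1 R _ (fun k => A i k) (fun k => P k j)).
Qed.


Section Phi.
Variable R : realType.

Lemma pm1 r {x : R} : 0 < x -> powR x (r - 1) * x = powR x r.
Proof.
move=> x0; rewrite -{2}(powRr1 (ltW x0)) -powRD; first by congr powR; ring.
by apply/implyP => _; rewrite gt_eqF.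
Qed.

Lemma scal1 (r u v : R) : 0 <= r -> 0 <= v -> v <= u ->
  (powR u r - powR v r) * v <= 2 * r * powR u r * (u - v).
Proof.
move=> r0 v0 vu.
have [vz|vp] := eqVneq v 0.
  by rewrite vz mulr0 mulr_ge0 ?mulr_ge0 ?powR_ge0 // subr_ge0 -vz.
have vp' : 0 < v by rewrite lt_neqAle eq_sym vp v0.
have up : 0 < u by exact: lt_le_trans vu.
have h1 : v <= u <= u by rewrite vu lexx.
have h2 : v <= v <= u by rewrite vu lexx.
have := @lip_pow R v u r u v vp' h1 h2.
have uv0 : 0 <= u - v by rewrite subr_ge0.
rewrite /K1 (ger0_norm r0) (ger0_norm uv0) => h.
have hv : powR v (r - 1) * v = powR v r by exact: pm1.
have hu : powR u (r - 1) * v <= powR u r.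
  by rewrite -(pm1 r up) ler_pM2l ?powR_gt0.
have hvu : powR v r <= powR u r.
  by apply: ge0_ler_powR => //; rewrite nnegrE ?ltW.
have dd : 0 <= powR u r - powR v r by rewrite subr_ge0.
have h' : powR u r - powR v r <= r * (powR v (r - 1) + powR u (r - 1)) * (u - v).
  by move: h; rewrite ger0_norm.
apply: le_trans (ler_wpM2r v0 h') _.
have e : r * (powR v (r - 1) + powR u (r - 1)) * (u - v) * v
  = r * (powR v (r - 1) * v + powR u (r - 1) * v) * (u - v) by ring.
rewrite e hv.
have e2 : 2 * r * powR u r * (u - v) = r * (2 * powR u r) * (u - v) by ring.
rewrite e2; apply: ler_wpM2r => //; apply: ler_wpM2l => //; lra.
Qed.

Definition phi (r : R) {N n : nat} (X : 'M[R]_(N, n)) := powR (frob X) r *: X.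

Lemma F1_wlog (r : R) (N n : nat) (X Y : 'M[R]_(N, n)) : 0 <= r -> frob Y <= frob X ->
  frob (phi r X - phi r Y) <= (1 + 2 * r) * frob (X - Y) * (powR (frob X) r + powR (frob Y) r).
Proof.
move=> r0 yx.
have e : phi r X - phi r Y = powR (frob X) r *: (X - Y) + (powR (frob X) r - powR (frob Y) r) *: Y.
  by apply/matrixP => i j; rewrite /phi !mxE; ring.
rewrite e; apply: le_trans (frobD _ _) _.
rewrite !frobZ.
have hvu : powR (frob Y) r <= powR (frob X) r.
  by apply: ge0_ler_powR => //; rewrite nnegrE frob_ge0.
have dd : 0 <= powR (frob X) r - powR (frob Y) r by rewrite subr_ge0.
rewrite (ger0_norm (powR_ge0 _ _)) (ger0_norm dd).
have := @scal1 r (frob X) (frob Y) r0 (frob_ge0 Y) yx.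
have := frob_dist X Y.
have := powR_ge0 (frob X) r; have := powR_ge0 (frob Y) r; have := frob_ge0 (X - Y).
set u := frob X; set v := frob Y; set w := frob (X - Y); set pu := powR u r; set pv := powR v r.
move=> w0 pv0 pu0 hd hs.
have huv : u - v <= w by move: hd; rewrite ler_norml => /andP[].
have : 2 * r * pu * (u - v) <= 2 * r * pu * w.
  by apply: ler_wpM2l => //; rewrite !mulr_ge0.
have : 0 <= (1 + 2 * r) * w * pv by rewrite !mulr_ge0 // addr_ge0 // mulr_ge0.
lra.
Qed.

Lemma F1 (r : R) (N n : nat) (X Y : 'M[R]_(N, n)) : 0 <= r ->
  frob (phi r X - phi r Y) <= (1 + 2 * r) * frob (X - Y) * (powR (frob X) r + powR (frob Y) r).
Proof.
move=> r0; have [yx|xy] := leP (frob Y) (frob X); first exact: F1_wlog.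
have h := @F1_wlog r N n Y X r0 (ltW xy).
have e1 : phi r X - phi r Y = -(phi r Y - phi r X) by rewrite opprB.
have e2 : X - Y = -(Y - X) by rewrite opprB.
by rewrite e1 e2 !frobN (addrC (powR (frob X) r)).
Qed.

End Phi.


Section Core.
Context {R : realType} {N n : nat}.
Implicit Types B D H X Y : 'M[R]_(N, n).
Local Notation ph r X := (@phi R r _ _ X).

Lemma fd X Y : `|frob (X + Y) - frob X| <= frob Y.
Proof. by have := frob_dist (X + Y) X; rewrite (addrC X Y) addrK. Qed.

Lemma K1_ge0 lo hi q : 0 <= @K1 R lo hi q.
Proof. by rewrite /K1 mulr_ge0 // addr_ge0 // powR_ge0. Qed.

Lemma K2_ge0 lo hi q : 0 <= @K2 R lo hi q.
Proof. by rewrite /K2 mulr_ge0 // addr_ge0 // powR_ge0. Qed.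

Lemma pw2 (r x : R) : 0 <= x -> powR x r = powR (x ^+ 2) (r / 2).
Proof.
move=> x0; rewrite -powR_mulrn // -powRrM; by congr powR; field.
Qed.

Lemma sqd (x y e : R) : 0 <= x -> 0 <= y -> x <= 3/2 -> y <= 3/2 -> `|x - y| <= e ->
  `|x ^+ 2 - y ^+ 2| <= 3 * e.
Proof.
move=> x0 y0 x1 y1 h; rewrite subr_sqr normrM (ger0_norm (addr_ge0 x0 y0)).
have e0 : 0 <= e by exact: le_trans (normr_ge0 _) h.
rewrite mulrC; apply: le_trans (ler_wpM2l (addr_ge0 x0 y0) h) _.
have : x + y <= 3 by lra.
nra.
Qed.

Lemma idC (pa pb pa' pb' : R) B D H :
  pa *: (B + D) - pb *: B - (pa' *: (B + D + H) - pb' *: (B + H))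
  = (pa - pa' - pb + pb') *: (B + D) + (pb - pb') *: D - (pa' - pb') *: H.
Proof. by apply/matrixP => i j; rewrite !mxE; ring. Qed.

Lemma sq_range (x lo hi : R) : 0 <= lo -> lo <= x -> x <= hi ->
  lo * lo <= x ^+ 2 /\ x ^+ 2 <= hi * hi.
Proof. move=> l0 lx xh; rewrite expr2; split; nra. Qed.

Lemma region (b0 x1 x2 x3 d h : R) :
  0 <= b0 -> 0 <= x1 -> 0 <= x2 -> 0 <= x3 -> 0 <= d -> 0 <= h ->
  b0 ^+ 2 + d ^+ 2 + h ^+ 2 = 1 -> d < 1/16 -> h < 1/16 ->
  `|x1 - b0| <= d -> `|x2 - x1| <= h -> `|x3 - b0| <= h -> `|x2 - x3| <= d ->
  [/\ 1/4 <= x1 ^+ 2 <= 2, 1/4 <= b0 ^+ 2 <= 2, 1/4 <= x2 ^+ 2 <= 2,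
      1/4 <= x3 ^+ 2 <= 2 & 1/4 <= b0 ^+ 2 + (x2 ^+ 2 - x1 ^+ 2) <= 2]
  /\ [/\ `|x2 ^+ 2 - x1 ^+ 2| <= 3 * h, `|x1 ^+ 2 - b0 ^+ 2| <= 3 * d,
      `|b0 ^+ 2 - x3 ^+ 2| <= 3 * h, `|x2 ^+ 2 - x3 ^+ 2| <= 3 * d & x1 <= 2].
Proof.
move=> b00 x10 x20 x30 d0 h0 hs hd hh.
rewrite !ler_norml => /andP[e1 e1'] /andP[e2 e2'] /andP[e3 e3'] /andP[e4 e4'].
have hb2 : b0 ^+ 2 <= 1 by have := sqr_ge0 d; have := sqr_ge0 h; lra.
have hb1 : b0 <= 1 by nra.
have dd : d ^+ 2 <= 1/256 by rewrite expr2; nra.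
have hhh : h ^+ 2 <= 1/256 by rewrite expr2; nra.
have hb3 : 127/128 <= b0 ^+ 2 by lra.
have hb : 127/128 <= b0 by move: hb3; rewrite expr2; nra.
have q1 : `|x2 ^+ 2 - x1 ^+ 2| <= 3 * h.
  by apply: sqd => //; try lra; rewrite ler_norml; apply/andP; split; lra.
have q2 : `|x1 ^+ 2 - b0 ^+ 2| <= 3 * d.
  by apply: sqd => //; try lra; rewrite ler_norml; apply/andP; split; lra.
have q3 : `|b0 ^+ 2 - x3 ^+ 2| <= 3 * h.
  by apply: sqd => //; try lra; rewrite ler_norml; apply/andP; split; lra.
have q4 : `|x2 ^+ 2 - x3 ^+ 2| <= 3 * d.
  by apply: sqd => //; try lra; rewrite ler_norml; apply/andP; split; lra.
have r1 := @sq_range x1 (9/10) (11/10) ltac:(lra) ltac:(lra) ltac:(lra).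
have r2 := @sq_range x2 (8/10) (12/10) ltac:(lra) ltac:(lra) ltac:(lra).
have r3 := @sq_range x3 (9/10) (11/10) ltac:(lra) ltac:(lra) ltac:(lra).
move: (q1); rewrite ler_norml => /andP[u1 u2].
split.
  by split; apply/andP; split; lra.
by split; [apply/andP; split | rewrite -ler_norml; exact: q2 | rewrite -ler_norml; exact: q3 | rewrite -ler_norml; exact: q4 | lra].
Qed.

Lemma fin_comb (T1 T2 T3 x1 d h k1 k2 : R) : 0 <= T1 -> 0 <= T2 -> 0 <= T3 ->
  0 <= x1 -> 0 <= d -> 0 <= h -> 0 <= k1 -> 0 <= k2 -> x1 <= 2 ->
  T1 <= (9 * k2 + 2 * k1) * (h * d) -> T2 <= k1 * (3 * h) -> T3 <= k1 * (3 * d) ->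
  T1 * x1 + T2 * d + T3 * h <= (18 * k2 + 10 * k1) * h * d.
Proof.
move=> T10 T20 T30 x10 d0 h0 k10 k20 x1b t1 t2 t3.
have u1 : T1 * x1 <= (9 * k2 + 2 * k1) * (h * d) * 2 by apply: ler_pM.
have u2 : T2 * d <= k1 * (3 * h) * d by apply: ler_wpM2r.
have u3 : T3 * h <= k1 * (3 * d) * h by apply: ler_wpM2r.
have e : (18 * k2 + 10 * k1) * h * d = (9 * k2 + 2 * k1) * (h * d) * 2 + k1 * (3 * h) * d + k1 * (3 * d) * h by ring.
rewrite e; lra.
Qed.

Definition C0 (r : R) := 64 * (1 + 2 * r) * powR 3 r
  + 18 * @K2 R (1/4) 2 (r / 2) + 10 * @K1 R (1/4) 2 (r / 2).

Lemma coreC (r : R) B D H : 0 <= r ->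
  frob B ^+ 2 + frob D ^+ 2 + frob H ^+ 2 = 1 -> frob D < 1/16 -> frob H < 1/16 ->
  frob (ph r (B + D) - ph r B - (ph r (B + D + H) - ph r (B + H)))
    <= (18 * @K2 R (1/4) 2 (r / 2) + 10 * @K1 R (1/4) 2 (r / 2)) * frob H * frob D.
Proof.
move=> r0 hsum hd hh.
have e4 : `|frob (B + D + H) - frob (B + H)| <= frob D.
  by have := fd (B + H) D; rewrite -addrA (addrC H D) addrA.
have [[ra rb ra' rb' rbd] [hd1 hab hbb' ha'b' x1b]] :=
  region _ _ _ _ _ _ (frob_ge0 B) (frob_ge0 (B + D)) (frob_ge0 (B + D + H)) (frob_ge0 (B + H))
    (frob_ge0 D) (frob_ge0 H) hsum hd hh (fd B D) (fd (B + D) H) (fd B H) e4.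
have hq : `|frob (B + H) ^+ 2 - (frob B ^+ 2 + (frob (B + D + H) ^+ 2 - frob (B + D) ^+ 2))|
    <= 2 * (frob D * frob H).
  have -> : frob (B + H) ^+ 2 - (frob B ^+ 2 + (frob (B + D + H) ^+ 2 - frob (B + D) ^+ 2))
     = frob (B + H) ^+ 2 - frob B ^+ 2 - (frob (B + D + H) ^+ 2 - frob (B + D) ^+ 2) by ring.
  have two : (0 : R) <= 2 by lra.
  rewrite quad_id normrM normrN (ger0_norm two).
  have c := ip_cs D H; rewrite ler_pM2l //; lra.
rewrite /phi !(pw2 r _ (frob_ge0 _)) idC.
move: ra rb ra' rb' rbd hd1 hab hbb' ha'b' hq.
move: (frob_ge0 (B + D)) x1b.
set q := r / 2.
set a := frob (B + D) ^+ 2; set b := frob B ^+ 2; set a' := frob (B + D + H) ^+ 2;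
set b' := frob (B + H) ^+ 2.
move=> x10 x1b ra rb ra' rb' rbd hd1 hab hbb' ha'b' hq.
apply: le_trans (frobB _ _) _; apply: le_trans (lerD (frobD _ _) (lexx _)) _.
rewrite !frobZ.
have lo0 : (0 : R) < 1/4 by lra.
have rad : 1/4 <= a + (a' - a) <= 2 by rewrite addrC subrK.
have t1b : `|powR a q - powR a' q - powR b q + powR b' q|
    <= (9 * @K2 R (1/4) 2 q + 2 * @K1 R (1/4) 2 q) * (frob H * frob D).
  have sd := @sd_pow R (1/4) 2 q a b (a' - a) lo0 ra rb rad rbd.
  have lp := @lip_pow R (1/4) 2 q b' (b + (a' - a)) lo0 rb' rbd.
  have -> : powR a q - powR a' q - powR b q + powR b' q
    = - (powR (a + (a' - a)) q - powR a q - (powR (b + (a' - a)) q - powR b q))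
      + (powR b' q - powR (b + (a' - a)) q).
    by rewrite (addrC a) subrK; ring.
  apply: le_trans (ler_normD _ _) _; rewrite normrN.
  have k10 := K1_ge0 (1/4) 2 q; have k20 := K2_ge0 (1/4) 2 q.
  have s1 : @K2 R (1/4) 2 q * `|a' - a| * `|a - b|
      <= @K2 R (1/4) 2 q * (3 * frob H) * (3 * frob D).
    apply: ler_pM => //; first by rewrite mulr_ge0.
    exact: ler_wpM2l.
  have s2 : @K1 R (1/4) 2 q * `|b' - (b + (a' - a))|
      <= @K1 R (1/4) 2 q * (2 * (frob D * frob H)) by exact: ler_wpM2l.
  have := le_trans sd s1; have := le_trans lp s2.
  set K1' := @K1 R (1/4) 2 q; set K2' := @K2 R (1/4) 2 q.
  set u := `|_ - (_ - _)|; set v := `|powR b' q - _|.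
  move=> h1 h2.
  have e : (9 * K2' + 2 * K1') * (frob H * frob D)
    = K2' * (3 * frob H) * (3 * frob D) + K1' * (2 * (frob D * frob H)) by ring.
  rewrite e; lra.
have t2b : `|powR b q - powR b' q| <= @K1 R (1/4) 2 q * (3 * frob H).
  apply: le_trans (@lip_pow R (1/4) 2 q b b' lo0 rb rb') _.
  by apply: ler_wpM2l; [exact: K1_ge0 | exact: hbb'].
have t3b : `|powR a' q - powR b' q| <= @K1 R (1/4) 2 q * (3 * frob D).
  apply: le_trans (@lip_pow R (1/4) 2 q a' b' lo0 ra' rb') _.
  by apply: ler_wpM2l; [exact: K1_ge0 | exact: ha'b'].
apply: fin_comb => //; try exact: normr_ge0; try exact: frob_ge0.
  exact: K1_ge0.
exact: K2_ge0.
Qed.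

End Core.


Section Core1.
Context {R : realType} {N n : nat}.
Implicit Types B D H X Y : 'M[R]_(N, n).
Local Notation ph r X := (@phi R r _ _ X).

Lemma comb (c P f e rest t1 t2 x1 x2 x3 x4 : R) : 0 <= c -> 0 <= P -> 0 <= f ->
  0 <= rest -> 1/16 <= e -> x1 <= P -> x2 <= P -> x3 <= P -> x4 <= P ->
  t1 <= c * f * (x1 + x2) -> t2 <= c * f * (x3 + x4) ->
  t1 + t2 <= (64 * c * P + rest) * f * e.
Proof.
move=> c0 P0 f0 r0 e0 h1 h2 h3 h4 t1b t2b.
have cf0 : 0 <= c * f by exact: mulr_ge0.
have v1 : c * f * (x1 + x2) <= c * f * (2 * P) by apply: ler_wpM2l => //; lra.
have v2 : c * f * (x3 + x4) <= c * f * (2 * P) by apply: ler_wpM2l => //; lra.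
have w : 0 <= (c * f * P) * (16 * e - 1) by apply: mulr_ge0; [rewrite mulr_ge0 | lra].
have w2 : 0 <= rest * f * e by rewrite !mulr_ge0 //; lra.
have ee : (64 * c * P + rest) * f * e = 4 * (c * f * P) * (16 * e - 1) + 4 * (c * f * (2 * P)) / 2 + rest * f * e by field.
rewrite ee; lra.
Qed.

Lemma P3b (r x : R) : 0 <= r -> 0 <= x -> x <= 3 -> powR x r <= powR 3 r.
Proof. by move=> r0 x0 x3; apply: ge0_ler_powR => //; rewrite nnegrE //; lra. Qed.

Lemma idA (P1 P2 P3 P4 : 'M[R]_(N, n)) : P1 - P2 - (P3 - P4) = (P1 - P3) - (P2 - P4).
Proof. by apply/matrixP => i j; rewrite !mxE; ring. Qed.

Lemma dd1 B D H : (B + D) - (B + D + H) = - H.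
Proof. by apply/matrixP => i j; rewrite !mxE; ring. Qed.
Lemma dd2 B H : B - (B + H) = - H.
Proof. by apply/matrixP => i j; rewrite !mxE; ring. Qed.
Lemma dd3 B D : (B + D) - B = D.
Proof. by apply/matrixP => i j; rewrite !mxE; ring. Qed.
Lemma dd4 B D H : (B + D + H) - (B + H) = D.
Proof. by apply/matrixP => i j; rewrite !mxE; ring. Qed.

Lemma le1 (x y z : R) : 0 <= x -> x ^+ 2 + y ^+ 2 + z ^+ 2 = 1 -> x <= 1.
Proof. move=> x0 h; have := sqr_ge0 y; have := sqr_ge0 z; rewrite expr2 in h; nra. Qed.

Lemma core1 (r : R) B D H : 0 <= r ->
  frob B ^+ 2 + frob D ^+ 2 + frob H ^+ 2 = 1 ->
  frob (ph r (B + D) - ph r B - (ph r (B + D + H) - ph r (B + H)))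
    <= C0 r * frob H * frob D.
Proof.
move=> r0 hs.
have b1 : frob B <= 1.
  by apply: le1 (frob_ge0 _) _; exact: hs.
have d1 : frob D <= 1.
  have := frob_ge0 D; have := sqr_ge0 (frob B); have := sqr_ge0 (frob H).
  move: hs; rewrite !expr2; nra.
have h1 : frob H <= 1.
  have := frob_ge0 H; have := sqr_ge0 (frob B); have := sqr_ge0 (frob D).
  move: hs; rewrite !expr2; nra.
have nBD : frob (B + D) <= 3 by have := frobD B D; lra.
have nBH : frob (B + H) <= 3 by have := frobD B H; lra.
have nBDH : frob (B + D + H) <= 3 by have := frobD (B + D) H; have := frobD B D; lra.
have nB : frob B <= 3 by lra.
have c0 : 0 <= 1 + 2 * r by lra.
have P0 : 0 <= powR 3 r := powR_ge0 _ _.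
have rest0 : 0 <= 18 * @K2 R (1/4) 2 (r / 2) + 10 * @K1 R (1/4) 2 (r / 2).
  by rewrite addr_ge0 // mulr_ge0 // ?K1_ge0 ?K2_ge0.
have C0e : C0 r = 64 * (1 + 2 * r) * powR 3 r
  + (18 * @K2 R (1/4) 2 (r / 2) + 10 * @K1 R (1/4) 2 (r / 2)) by rewrite /C0; ring.
have [dl|dl] := leP (1/16) (frob D).
  rewrite idA; apply: le_trans (frobB _ _) _.
  have f1 := @F1 R r N n (B + D) (B + D + H) r0.
  have f2 := @F1 R r N n B (B + H) r0.
  rewrite dd1 frobN in f1; rewrite dd2 frobN in f2.
  rewrite C0e; apply: (comb _ _ _ _ _ _ _ _ _ _ _ c0 P0 (frob_ge0 _) rest0 dl _ _ _ _ f1 f2).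
  1-4: apply: ge0_ler_powR => //; rewrite ?nnegrE ?frob_ge0 //; lra.
have [hl|hl] := leP (1/16) (frob H).
  apply: le_trans (frobB _ _) _.
  have f1 := @F1 R r N n (B + D) B r0.
  have f2 := @F1 R r N n (B + D + H) (B + H) r0.
  rewrite dd3 in f1; rewrite dd4 in f2.
  rewrite C0e mulrAC; apply: (comb _ _ _ _ _ _ _ _ _ _ _ c0 P0 (frob_ge0 _) rest0 hl _ _ _ _ f1 f2).
  1-4: apply: ge0_ler_powR => //; rewrite ?nnegrE ?frob_ge0 //; lra.
apply: le_trans (@coreC R N n r B D H r0 hs dl hl) _.
rewrite C0e; apply: ler_wpM2r; first exact: frob_ge0.
apply: ler_wpM2r; first exact: frob_ge0.
by rewrite lerDr !mulr_ge0 //; lra.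
Qed.

End Core1.


Section Norm.
Context {R : realType} {N n : nat}.
Implicit Types B D H X Y : 'M[R]_(N, n).
Local Notation ph r X := (@phi R r _ _ X).

Lemma phiZ (r t : R) X : 0 < t -> ph r (t *: X) = powR t (r + 1) *: ph r X.
Proof.
move=> t0; rewrite /phi frobZ (gtr0_norm t0) powRM ?(ltW t0) ?frob_ge0 //.
rewrite !scalerA; congr (_ *: _).
rewrite powRD; last by apply/implyP => _; rewrite gt_eqF.
rewrite powRr1 ?(ltW t0) //; ring.
Qed.

Lemma idZ (c : R) (P1 P2 P3 P4 : 'M[R]_(N, n)) :
  c *: P1 - c *: P2 - (c *: P3 - c *: P4) = c *: (P1 - P2 - (P3 - P4)).
Proof. by apply/matrixP => i j; rewrite !mxE; ring. Qed.

Lemma core (r : R) B D H : 0 <= r ->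
  frob (ph r (B + D) - ph r B - (ph r (B + D + H) - ph r (B + H)))
    <= C0 r * frob H * frob D
       * powR (frob B ^+ 2 + frob D ^+ 2 + frob H ^+ 2) ((r - 1) / 2).
Proof.
move=> r0.
have [h0|hp] := eqVneq (frob H) 0.
  by rewrite (frob_eq0 H h0) !addr0 subrr !frob0 mulr0 !mul0r.
have hpos : 0 < frob H by rewrite lt_neqAle eq_sym hp frob_ge0.
set M := frob B ^+ 2 + frob D ^+ 2 + frob H ^+ 2.
have Mp : 0 < M.
  rewrite /M; have := sqr_ge0 (frob B); have := sqr_ge0 (frob D).
  have : 0 < frob H ^+ 2 by rewrite exprn_gt0.
  lra.
set m := Num.sqrt M.
have mp : 0 < m by rewrite sqrtr_gt0.
have m2 : m ^+ 2 = M by rewrite sqr_sqrtr // ltW.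
have mi : 0 < m^-1 by rewrite invr_gt0.
have back : forall X, X = m *: (m^-1 *: X).
  by move=> X; rewrite scalerA mulfV ?scale1r // gt_eqF.
have hs' : frob (m^-1 *: B) ^+ 2 + frob (m^-1 *: D) ^+ 2 + frob (m^-1 *: H) ^+ 2 = 1.
  rewrite !frobZ (gtr0_norm mi) !exprMn.
  have -> : m^-1 ^+ 2 * frob B ^+ 2 + m^-1 ^+ 2 * frob D ^+ 2 + m^-1 ^+ 2 * frob H ^+ 2
     = m^-1 ^+ 2 * M by rewrite /M; ring.
  by rewrite -m2 exprVn mulVf // expf_neq0 // gt_eqF.
have c1 := @core1 R N n r (m^-1 *: B) (m^-1 *: D) (m^-1 *: H) r0 hs'.
rewrite -!scalerDr in c1.
rewrite !frobZ (gtr0_norm mi) in c1.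
have e : forall X, ph r X = ph r (m *: (m^-1 *: X)) by move=> X; rewrite -back.
rewrite (e (B + D)) (e B) (e (B + D + H)) (e (B + H)).
rewrite (phiZ r m _ mp) (phiZ r m _ mp) (phiZ r m _ mp) (phiZ r m _ mp) idZ.
rewrite frobZ (gtr0_norm (powR_gt0 _ mp)).
have -> : powR M ((r - 1) / 2) = powR m (r - 1) by rewrite -m2 -pw2 // ltW.
have pr : powR m (r + 1) = powR m (r - 1) * m * m.
  have a1 := @pm1 R r m mp; have a2 := @pm1 R (r + 1) m mp.
  have er : r + 1 - 1 = r by ring.
  by rewrite er in a2; rewrite -a2 -a1.
rewrite pr.
apply: le_trans (ler_wpM2l _ c1) _.
  by rewrite !mulr_ge0 ?powR_ge0 ?ltW.
rewrite le_eqVlt; apply/orP; left; apply/eqP; field; by apply/eqP => hm; rewrite hm ltxx in mp.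
Qed.

End Norm.


Section Final.
Context {R : realType}.

Lemma pow_scale (e x y al be : R) : 0 < x -> 0 < y -> 0 <= al -> 0 <= be ->
  x <= al * y -> y <= be * x ->
  powR x e <= (powR al e + powR be (- e)) * powR y e.
Proof.
move=> x0 y0 al0 be0 h1 h2.
have py := powR_gt0 e y0.
have pb := powR_ge0 be (- e).
have pa := powR_ge0 al e.
have [e0|e0] := leP 0 e.
  have : powR x e <= powR (al * y) e.
    by apply: ge0_ler_powR => //; rewrite nnegrE ?mulr_ge0 // ltW.
  rewrite (powRM _ al0 (ltW y0)) => h.
  have : 0 <= powR be (- e) * powR y e by rewrite mulr_ge0 // ltW.
  rewrite mulrDl; lra.
have ne : 0 <= - e by rewrite oppr_ge0 ltW.
have : powR y (- e) <= powR (be * x) (- e).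
  by apply: ge0_ler_powR => //; rewrite nnegrE ?mulr_ge0 // ltW.
rewrite (powRM _ be0 (ltW x0)) => h.
have px := powR_gt0 (- e) x0.
have py' := powR_gt0 (- e) y0.
have ex : powR x e = (powR x (- e))^-1 by rewrite -powRN opprK.
have ey : powR y e = (powR y (- e))^-1 by rewrite -powRN opprK.
rewrite ex ey.
set X := powR x (- e); set Y := powR y (- e); set Pb := powR be (- e).
have : Pb * Y^-1 - X^-1 = (Pb * X - Y) / (X * Y).
  by field; apply/andP; split; rewrite gt_eqF.
have : 0 <= (Pb * X - Y) / (X * Y).
  by rewrite divr_ge0 ?subr_ge0 // mulr_ge0 // ltW.
have : 0 <= powR al e * Y^-1 by rewrite mulr_ge0 // invr_ge0 ltW.
rewrite mulrDl; lra.
Qed.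

Lemma sq_mono (x y : R) : 0 <= x -> x <= y -> x ^+ 2 <= y ^+ 2.
Proof. move=> x0 xy; rewrite !expr2; nra. Qed.

Lemma mono4 (c A A' B B' C C' : R) : 0 <= c -> 0 <= A -> A <= A' -> 0 <= B -> B <= B' ->
  0 <= C -> C <= C' -> c * A * B * C <= c * A' * B' * C'.
Proof.
move=> c0 a0 aa b0 bb c00 cc.
apply: ler_pM => //; first by rewrite !mulr_ge0.
apply: ler_pM => //; first by rewrite !mulr_ge0.
exact: ler_wpM2l.
Qed.

Lemma C0_ge0 (r : R) : 0 <= r -> 0 <= C0 r.
Proof.
move=> r0; rewrite /C0 !addr_ge0 ?mulr_ge0 ?K1_ge0 ?K2_ge0 ?powR_ge0 //; try lra.
all: by rewrite addr_ge0 ?powR_ge0.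
Qed.

End Final.

Theorem lemma3p14 (R : realType) (p K : R) (hp : 2 <= p) (hK : 0 < K) :
  exists c : R -> R -> R,
  forall (N n : nat) (Psi : 'M[R]_n) (xi xio G : 'M[R]_(N, n)),
    Psi \in unitmx ->
    frob (bfield p K (xi *m Psi) - bfield p K (xio *m Psi)
          - (bfield p K ((xi + G) *m Psi) - bfield p K ((xio + G) *m Psi)))
    <= c (frob Psi) (frob (invmx Psi)) * frob G
       * powR (frob xio ^+ 2 + frob (xi - xio) ^+ 2 + frob G ^+ 2) ((p - 3) / 2)
       * frob (xi - xio).
Proof.
set r := p - 2.
have r0 : 0 <= r by rewrite /r subr_ge0.
set e := (p - 3) / 2.
exists (fun a b => K * C0 r * a ^+ 2 * (powR (a ^+ 2) e + powR (b ^+ 2) (- e))).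
move=> N n Psi xi xio G hu.
set B := xio *m Psi; set D := (xi - xio) *m Psi; set H := G *m Psi.
have bf : forall X : 'M[R]_(N, n), bfield p K X = K *: @phi R r N n X.
  by move=> X; rewrite /bfield /phi scalerA.
have e1 : xi *m Psi = B + D by rewrite /B /D -mulmxDl addrC subrK.
have e2 : (xi + G) *m Psi = B + D + H by rewrite mulmxDl e1.
have e3 : (xio + G) *m Psi = B + H by rewrite mulmxDl.
rewrite e1 e2 e3 !bf idZ frobZ (gtr0_norm hK).
set a := frob Psi; set b := frob (invmx Psi).
have a0 : 0 <= a := frob_ge0 _.
have b0 : 0 <= b := frob_ge0 _.
have K0 := ltW hK.
have C00 : 0 <= C0 r := C0_ge0 r r0.
have S0 : 0 <= powR (a ^+ 2) e + powR (b ^+ 2) (- e) by rewrite addr_ge0 ?powR_ge0.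
have [g0|gp] := eqVneq (frob G) 0.
  have -> : H = 0 by rewrite /H (frob_eq0 G g0) mul0mx.
  by rewrite !addr0 subrr frob0 g0 !mulr0 !mul0r.
have [x0|xp] := eqVneq (frob (xi - xio)) 0.
  have -> : D = 0 by rewrite /D (frob_eq0 _ x0) mul0mx.
  by rewrite !addr0 !subrr frob0 x0 !mulr0.
have gpos : 0 < frob G by rewrite lt_neqAle eq_sym gp frob_ge0.
have xpos : 0 < frob (xi - xio) by rewrite lt_neqAle eq_sym xp frob_ge0.
have hB : frob B <= frob xio * a by exact: frob_mul.
have hD : frob D <= frob (xi - xio) * a by exact: frob_mul.
have hH : frob H <= frob G * a by exact: frob_mul.
have iB : frob xio <= frob B * b by rewrite -{1}(mulmxK hu xio); exact: frob_mul.
have iD : frob (xi - xio) <= frob D * b by rewrite -{1}(mulmxK hu (xi - xio)); exact: frob_mul.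
have iH : frob G <= frob H * b by rewrite -{1}(mulmxK hu G); exact: frob_mul.
have Hpos : 0 < frob H.
  rewrite lt_neqAle frob_ge0 andbT eq_sym; apply/eqP => hz.
  by move: iH; rewrite hz mul0r => hh; have := lt_le_trans gpos hh; rewrite ltxx.
set Mo := frob xio ^+ 2 + frob (xi - xio) ^+ 2 + frob G ^+ 2.
set M' := frob B ^+ 2 + frob D ^+ 2 + frob H ^+ 2.
have Mop : 0 < Mo.
  have := sqr_ge0 (frob xio); have := sqr_ge0 (frob (xi - xio)).
  have : 0 < frob G ^+ 2 by rewrite exprn_gt0.
  rewrite /Mo; lra.
have M'p : 0 < M'.
  have := sqr_ge0 (frob B); have := sqr_ge0 (frob D).
  have : 0 < frob H ^+ 2 by rewrite exprn_gt0.
  rewrite /M'; lra.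
have le1 : M' <= a ^+ 2 * Mo.
  have q1 := sq_mono _ _ (frob_ge0 B) hB; have q2 := sq_mono _ _ (frob_ge0 D) hD.
  have q3 := sq_mono _ _ (frob_ge0 H) hH.
  rewrite !exprMn in q1 q2 q3; rewrite /M' /Mo; lra.
have le2 : Mo <= b ^+ 2 * M'.
  have q1 := sq_mono _ _ (frob_ge0 _) iB; have q2 := sq_mono _ _ (frob_ge0 _) iD.
  have q3 := sq_mono _ _ (frob_ge0 _) iH.
  rewrite !exprMn in q1 q2 q3; rewrite /M' /Mo; lra.
have ps := pow_scale e _ _ _ _ M'p Mop (sqr_ge0 a) (sqr_ge0 b) le1 le2.
have cr := @core R N n r B D H r0.
have er : (r - 1) / 2 = e by rewrite /r /e; field.
rewrite er -/M' in cr.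
apply: le_trans (ler_wpM2l K0 cr) _.
have m4 := mono4 _ _ _ _ _ _ _ C00 (frob_ge0 H) hH (frob_ge0 D) hD (powR_ge0 _ _) ps.
apply: le_trans (ler_wpM2l K0 m4) _.
rewrite le_eqVlt; apply/orP; left; apply/eqP; rewrite -/Mo; ring.
Qed.
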